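(* Let $\mathbb K\subset\mathbb{R}^n$ be bounded and let $f:\mathbb K\to\mathbb{R}$ be 1-Lipschitz with respect to the $\ell_\infty$-norm. Then for every $\epsilon>0$ there exist finitely many functions $f_1,\dots,f_m$ such that for all $\mathbf x\in\mathbb K$, $$\max_i f_i(\mathbf x)\le f(\mathbf x)\le\max_i f_i(\mathbf x)+\epsilon,$$ where each $f_i$ has the form $f_i(\mathbf x)=\min_{1\le j\le n}\{x_j-w^{(i)}_j,\;w^{(i)}_j-x_j\}+b_i$ for some $\mathbf w^{(i)}\in\mathbb{R}^n$ and $b_i\in\mathbb{R}$. *)

(* Defs.v *)
From HB Require Import structures.
From mathcomp Require Import all_boot all_order all_algebra.
From mathcomp Require Import reals.
Set Implicit Arguments. Unset Strict Implicit. Unset Printing Implicit Defensive.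
Import Order.TTheory GRing.Theory Num.Theory.
Local Open Scope ring_scope.

Definition linf_dist (R : realType) (n : nat) (x y : 'I_n -> R) : R :=
  \big[Num.max/0]_(j < n) `|x j - y j|.

Definition bounded_set (R : realType) (n : nat) (K : ('I_n -> R) -> Prop) : Prop :=
  exists M : R, forall x, K x -> forall j, `|x j| <= M.

Definition lip1_linf (R : realType) (n : nat) (K : ('I_n -> R) -> Prop)
  (f : ('I_n -> R) -> R) : Prop :=
  forall x y, K x -> K y -> `|f x - f y| <= linf_dist x y.

Definition min_unit (R : realType) (n : nat) (w : 'I_n.+1 -> R) (b : R)
  (x : 'I_n.+1 -> R) : R :=
  \big[Num.min/Num.min (x ord0 - w ord0) (w ord0 - x ord0)]_(j < n.+1)
     Num.min (x j - w j) (w j - x j) + b.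

(* Main.v *)
Require Import Defs.
From HB Require Import structures.
From mathcomp Require Import all_boot all_order all_algebra.
From mathcomp Require Import boolp reals.
From mathcomp Require Import ring lra.
Import Order.TTheory GRing.Theory Num.Theory.
Local Open Scope ring_scope.

Lemma min_neg_abs (R : realType) (a c : R) : Num.min (a - c) (c - a) = - `|a - c|.
Proof.
case: (lerP 0 (a - c)) => h.
  rewrite ger0_norm // min_r ?opprB //; lra.
rewrite ltr0_norm // opprK min_l //; lra.
Qed.

Lemma min_unit_eq (R : realType) (n : nat) (w : 'I_n.+1 -> R) (b : R) x :
  min_unit w b x = b - linf_dist x w.
Proof.
rewrite /min_unit.
have [i0 _ Hd] := @eq_bigmax _ _ _ (0:R) ord0 predT (fun j => `|x j - w j|)
   isT (fun i _ => normr_ge0 _).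
have Hd' : linf_dist x w = `|x i0 - w i0| := Hd.
have Hle : forall j, `|x j - w j| <= linf_dist x w.
  by move=> j; rewrite /linf_dist; apply: le_bigmax.
apply/eqP; rewrite eq_le; apply/andP; split.
  rewrite [b - _]addrC lerD2r; apply: le_trans (bigmin_le _ i0 _) _.
  by rewrite min_neg_abs Hd'.
rewrite [b - _]addrC lerD2r; apply: le_bigmin => [|j _].
  by rewrite min_neg_abs lerN2.
by rewrite min_neg_abs lerN2.
Qed.

Lemma grid1 (R : realType) (M d t : R) : 0 < d -> `|t| <= M ->
  exists k : 'I_(Num.truncn (2 * M / d)).+1,
    `|t - (- M + k%:R * d)| <= d.
Proof.
move=> d0 tM.
set s := (t + M) / d.
have [tl tr] : -M <= t /\ t <= M by move: tM; rewrite ler_norml => /andP[].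
have s0 : 0 <= s.
  rewrite /s divr_ge0 //; [lra | exact: ltW].
have sl : s <= 2 * M / d.
  rewrite /s ler_pM2r ?invr_gt0 //; lra.
have kl : (Num.truncn s < (Num.truncn (2 * M / d)).+1)%N.
  by rewrite ltnS le_truncn.
exists (Ordinal kl) => /=.
have h1 := truncn_le s; rewrite s0 in h1.
have h2 := truncnS_gt s.
rewrite -natr1 in h2.
have -> : t = s * d - M.
  rewrite /s -mulrA mulVf ?mulr1; first lra.
  by rewrite gt_eqF.
set k := (Num.truncn s)%:R in h1 h2 *.
have : 0 <= (s - k) * d.
  apply: mulr_ge0; [lra | exact: ltW].
have : (s - k) * d <= d.
  rewrite -[X in _ <= X]mul1r ler_pM2r //; lra.
move=> ? ?; rewrite ler_norml; apply/andP; split; lra.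
Qed.

Theorem lemma1 (R : realType) (n : nat) (K : ('I_n.+1 -> R) -> Prop)
  (f : ('I_n.+1 -> R) -> R) :
  bounded_set K -> lip1_linf K f ->
  forall eps : R, 0 < eps ->
  exists (m : nat) (w : 'I_m.+1 -> 'I_n.+1 -> R) (b : 'I_m.+1 -> R),
    forall x, K x ->
      \big[Num.max/min_unit (w ord0) (b ord0) x]_(i < m.+1) min_unit (w i) (b i) x
        <= f x
      /\ f x <= \big[Num.max/min_unit (w ord0) (b ord0) x]_(i < m.+1) min_unit (w i) (b i) x
               + eps.
Proof.
move=> [M HM] Hf eps eps0.
have [[x0 Kx0]|nK] := pselect (exists x, K x); last first.
  exists 0%N, (fun _ _ => 0), (fun _ => 0) => x Kx.
  by exfalso; apply: nK; exists x.
set d := eps / 4.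
have d0 : 0 < d by rewrite /d divr_gt0.
set N := Num.truncn (2 * M / d).
pose T := {ffun 'I_n.+1 -> 'I_N.+1}.
pose g (k : T) (j : 'I_n.+1) : R := - M + (k j)%:R * d.
pose cell (k : T) (y : 'I_n.+1 -> R) := K y /\ forall j, `|y j - g k j| <= d.
have cover : forall x, K x -> exists k : T, forall j, `|x j - g k j| <= d.
  move=> x Kx.
  have H := fun j => @grid1 R M d (x j) d0 (HM x Kx j).
  have [kf Hkf] := boolp.choice H.
  by exists [ffun j => kf j] => j; rewrite /g ffunE.
have Hp : forall k : T, exists p, K p /\ ((exists y, cell k y) -> cell k p).
  move=> k; have [[y Hy]|ny] := pselect (exists y, cell k y).
    by exists y; split => //; case: Hy.
  by exists x0; split => // H; exfalso; apply: ny.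
have [p Pp] := boolp.choice Hp.
have cardT : (0 < #|T|)%N by apply/card_gt0P; exists [ffun=> ord0].
set m := #|T|.-1.
have Hm : #|T| = m.+1 by rewrite /m prednK.
pose idx (i : 'I_m.+1) : T := enum_val (cast_ord (esym Hm) i).
exists m, (fun i => p (idx i)), (fun i => f (p (idx i))) => x Kx.
have A : forall w, K w -> min_unit w (f w) x <= f x.
  move=> w Kw; rewrite min_unit_eq.
  have := Hf x w Kx Kw; rewrite ler_norml => /andP[? ?]; lra.
split.
  apply: bigmax_le => [|i _]; apply: A; exact: (Pp _).1.
have [k Hk] := cover x Kx.
have [Kpk /(_ (ex_intro _ x (conj Kx Hk))) [_ Hpk]] := Pp k.
pose i := cast_ord Hm (enum_rank k).
have Hi : idx i = k by rewrite /idx /i cast_ordK enum_rankK.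
set F := fun i0 : 'I_m.+1 => min_unit (p (idx i0)) (f (p (idx i0))) x.
have Hb := le_bigmax (F ord0) F i.
suff : f x <= F i + eps by move: Hb; rewrite /F; lra.
rewrite /F Hi min_unit_eq.
have Hd : linf_dist x (p k) <= 2 * d.
  apply: bigmax_le => [|j _]; first by rewrite mulr_ge0 // ltW.
  have := Hk j; have := Hpk j.
  have -> : x j - p k j = (x j - g k j) - (p k j - g k j) by ring.
  move=> h1 h2; apply: le_trans (ler_normB _ _) _; lra.
have := Hf x (p k) Kx Kpk; rewrite ler_norml => /andP[? ?].
rewrite /d in Hd; lra.
Qed.
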